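(* Let $G$ be a graph of order $n$ and let $uv$ be an edge of $\Lambda(G)$. Then there exist at least $n-3$ odd pairs of $G$ whose first component is $\{u,v\}$.
   Context: All graphs are simple and finite. For a graph $G$ and disjoint $X, Y \subseteq V(G)$, $E(X,Y)$ denotes the set of edges with one endpoint in $X$ and the other in $Y$. An ordered pair $(X,Y)$ of disjoint subsets of $V(G)$ with $|X|=|Y|=2$ is an odd pair of $G$ if $|E(X,Y)|$ is odd. A $2$-subset $\{u,v\}\subseteq V(G)$ is an odd set if it is the first component of some odd pair of $G$. The graph $\Lambda(G)$ has vertex set $V(G)$, and $uv$ is an edge of $\Lambda(G)$ iff $\{u,v\}$ is an odd set of $G$. *)

(* Defs.v *)
From mathcomp Require Import all_boot.
Set Implicit Arguments. Unset Strict Implicit. Unset Printing Implicit Defensive.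

Definition simple_graph (T : finType) (e : rel T) : Prop :=
  symmetric e /\ irreflexive e.

(* |E(X,Y)|: number of edges with one endpoint in X and the other in Y.
   For disjoint X, Y each such edge corresponds to exactly one ordered pair
   (x, y) with x in X, y in Y. *)
Definition nedges (T : finType) (e : rel T) (X Y : {set T}) : nat :=
  #|[set p : T * T | (p.1 \in X) && (p.2 \in Y) && e p.1 p.2]|.

Definition odd_pair (T : finType) (e : rel T) (X Y : {set T}) : bool :=
  [&& [disjoint X & Y], #|X| == 2, #|Y| == 2 & odd (nedges e X Y)].

Definition odd_set (T : finType) (e : rel T) (X : {set T}) : bool :=
  [exists Y : {set T}, odd_pair e X Y].

Definition Lambda (T : finType) (e : rel T) : rel T :=
  fun u v => (u != v) && odd_set e [set u; v].

(* Main.v *)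
Require Import Defs.
From mathcomp Require Import all_boot.
From mathcomp Require Import zify.
Lemma sum2 (T : finType) (u v : T) (F : T -> nat) : u != v ->
  \sum_(x in [set u; v]) F x = F u + F v.
Proof.
move=> uv; rewrite big_setU1 ?big_set1 //= in_set1 //.
Qed.

Lemma nedges2 (T : finType) (e : rel T) u v a b : u != v -> a != b ->
  nedges e [set u; v] [set a; b] = e u a + e u b + (e v a + e v b).
Proof.
move=> uv ab.
rewrite /nedges -sum1_card big_mkcond /=.
set F := fun x y => if (x \in [set u; v]) && (y \in [set a; b]) && e x y then 1 else 0.
rewrite (eq_bigr (fun p => F p.1 p.2)); last by move=> p _; rewrite inE.
rewrite -(pair_bigA _ F) /= /F.
rewrite (bigID (fun x => x \in [set u; v])) /= [X in _ + X]big1 ?addn0; last first.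
  by move=> x /negbTE H; apply: big1 => y _; rewrite H.
rewrite sum2 //.
have H : forall x, \sum_(y : T) (if (y \in [set a; b]) && e x y then 1 else 0) = e x a + e x b.
  move=> x; rewrite (bigID (fun y => y \in [set a; b])) /= [X in _ + X]big1 ?addn0; last first.
    by move=> y /negbTE ->.
  rewrite sum2 // !inE !eqxx ?orbT /=.
  by case: (e x a); case: (e x b).
rewrite -!H; congr (_ + _); apply: eq_bigr => y _; by rewrite !inE eqxx ?orbT.
Qed.
Lemma oddpair_char (T : finType) (e : rel T) u v a b : u != v -> a != b ->
  a \notin [set u; v] -> b \notin [set u; v] ->
  odd_pair e [set u; v] [set a; b] = (odd (e u a + e v a) != odd (e u b + e v b)).
Proof.
move=> uv ab aX bX.
rewrite /odd_pair nedges2 // !cards2 ab uv /=.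
have -> : [disjoint [set u; v] & [set a; b]].
  rewrite disjoint_sym; apply/pred0P => x /=.
  case: (boolP (x \in [set a; b])) => //=.
  rewrite !inE => /orP[/eqP->|/eqP->]; [move: aX|move: bX]; by rewrite !inE => /negbTE.
rewrite andTb !oddD.
by move: (e u a) (e u b) (e v a) (e v b) => [] [] [] [].
Qed.
Lemma in2 (T : finType) (x y z : T) : x \in [set y; z] -> x != z -> x = y.
Proof. by rewrite !inE => /orP[/eqP|/eqP->] //; rewrite eqxx. Qed.
Theorem lemma3 (T : finType) (e : rel T) (u v : T) :
  simple_graph e -> Lambda e u v ->
  #|T| - 3 <= #|[set Y : {set T} | odd_pair e [set u; v] Y]|.
Proof.
move=> _ /andP[uv /existsP[Y HY]].
have HY' := HY.
case/and4P: HY => dis _ /cards2P[a [b [ab E]]] _.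
have aY : a \in Y by rewrite E !inE eqxx.
have bY : b \in Y by rewrite E !inE eqxx orbT.
have aX : a \notin [set u; v] by apply/negP => H; move: (disjointFr dis H); rewrite aY.
have bX : b \notin [set u; v] by apply/negP => H; move: (disjointFr dis H); rewrite bY.
rewrite E oddpair_char // in HY'.
set f := fun w => odd (e u w + e v w).
set D := ~: [set u; v; a].
have fab : f a != f b by [].
set g := fun w => if f w == f a then [set w; b] else [set w; a].
have HD : #|T| - 3 <= #|D|.
  have := cardsC [set u; v; a]; rewrite -/D setUC !cardsU1 cards1 aX.
  move=> <-; rewrite leq_subLR leq_add2r.
  by case: (u \notin [set v]).
have Da : forall w, w \in D -> w != a.
  by move=> w; rewrite !inE; case: (w == a); rewrite ?orbT.
have Du : forall w, w \in D -> w \notin [set u; v].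
  by move=> w; rewrite !inE; case: eqP => //; case: eqP.
apply: (leq_trans HD).
rewrite -(card_in_imset (f := g) (D := mem D)); last first.
  move=> w w' wD w'D.
  have wa := Da _ wD; have w'a := Da _ w'D.
  rewrite /g; case: ifP => /eqP fw; case: ifP => /eqP fw' /setP H.
  - apply: in2 (_ : w \in [set w'; b]) _; first by rewrite -H !inE eqxx.
    by apply/eqP => wb; move: fab; rewrite -wb fw eqxx.
  - have bw' : b = w' by apply: in2 (_ : b \in [set w'; a]) (_ : b != a); rewrite 1?eq_sym //; rewrite -H !inE eqxx orbT.
    subst w'; have ww : w = b by apply: in2 (_ : w \in [set b; a]) wa; rewrite -H !inE eqxx.
    by move: fab; rewrite -ww fw eqxx.
  - have bw' : b = w by apply: in2 (_ : b \in [set w; a]) (_ : b != a); rewrite 1?eq_sym //; rewrite H !inE eqxx orbT.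
    subst w; have ww : w' = b by apply: in2 (_ : w' \in [set b; a]) w'a; rewrite H !inE eqxx.
    by move: fab; rewrite -ww fw' eqxx.
  - apply: in2 (_ : w \in [set w'; a]) _ => //; by rewrite -H !inE eqxx.
apply: subset_leq_card; apply/subsetP => _ /imsetP[w wD ->].
have wX := Du _ wD.
rewrite inE /g; case: ifP => /eqP fw.
- have wb : w != b by apply/eqP => wb; move: fab; rewrite -wb fw eqxx.
  rewrite (oddpair_char _ e _ _ _ _ uv wb wX bX); change (f w != f b); rewrite fw; exact: fab.
- rewrite (oddpair_char _ e _ _ _ _ uv (Da _ wD) wX aX); change (f w != f a); exact/eqP.
Qed.
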